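(* Let $\mathsf K$ be a variety of $\tau$-algebras. Then $\mathsf K$ is closed under expansion: for every $\tau$-algebra $\mathbf A$, if $\mathbf A_{\bar s}\in\mathsf K$ for every $s\in A^\omega$, then $\mathbf A\in\mathsf K$.
   Context: $\tau$ is a set of operation symbols each of arity $\omega$; a $\tau$-algebra is $\mathbf A=(A,f^{\mathbf A})_{f\in\tau}$ with $f^{\mathbf A}:A^\omega\to A$. A variety is a class of $\tau$-algebras closed under isomorphic copies, homomorphic images, subalgebras and arbitrary direct products. For $s\in A^\omega$, $\mathbf A_{\bar s}$ denotes the subalgebra of $\mathbf A$ generated by the set $\{s_i:i\in\omega\}$. *)

(* Defs.v *)
(* A tau-algebra with every operation of arity omega:
   carrier A and interpretation ops : tau -> (nat -> A) -> A. *)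
Definition ops (tau A : Type) := tau -> (nat -> A) -> A.

Definition algclass (tau : Type) := forall A : Type, ops tau A -> Prop.

Definition is_hom {tau A B : Type} (fA : ops tau A) (fB : ops tau B) (h : A -> B) :=
  forall (f : tau) (s : nat -> A), h (fA f s) = fB f (fun i => h (s i)).

Definition surjective {A B : Type} (h : A -> B) := forall b, exists a, h a = b.
Definition injective {A B : Type} (h : A -> B) := forall x y, h x = h y -> x = y.

Definition closed_sub {tau A : Type} (fA : ops tau A) (P : A -> Prop) :=
  forall (f : tau) (s : nat -> A), (forall i, P (s i)) -> P (fA f s).

Definition sub_ops {tau A : Type} (fA : ops tau A) (P : A -> Prop)
  (HP : closed_sub fA P) : ops tau {x : A | P x} :=
  fun f s => exist P (fA f (fun i => proj1_sig (s i)))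
                     (HP f (fun i => proj1_sig (s i)) (fun i => proj2_sig (s i))).

Definition prod_ops {tau I : Type} (C : I -> Type) (fC : forall i, ops tau (C i))
  : ops tau (forall i, C i) :=
  fun f s => fun i => fC i f (fun n => s n i).

Definition variety {tau : Type} (K : algclass tau) : Prop :=
  (forall (A B : Type) (fA : ops tau A) (fB : ops tau B) (h : A -> B),
      K A fA -> is_hom fA fB h -> injective h -> surjective h -> K B fB)
  /\ (forall (A B : Type) (fA : ops tau A) (fB : ops tau B) (h : A -> B),
      K A fA -> is_hom fA fB h -> surjective h -> K B fB)
  /\ (forall (A : Type) (fA : ops tau A) (P : A -> Prop) (HP : closed_sub fA P),
      K A fA -> K {x : A | P x} (sub_ops fA P HP))
  /\ (forall (I : Type) (C : I -> Type) (fC : forall i, ops tau (C i)),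
      (forall i, K (C i) (fC i)) -> K (forall i, C i) (prod_ops C fC)).

Definition generated {tau A : Type} (fA : ops tau A) (s : nat -> A) (x : A) : Prop :=
  forall P : A -> Prop, closed_sub fA P -> (forall i, P (s i)) -> P x.

Lemma generated_closed {tau A : Type} (fA : ops tau A) (s : nat -> A) :
  closed_sub fA (generated fA s).
Proof.
  intros f t Ht P HP Hs. apply HP. intro i. exact (Ht i P HP Hs).
Qed.

Definition gen_ops {tau A : Type} (fA : ops tau A) (s : nat -> A)
  : ops tau {x : A | generated fA s x} :=
  sub_ops fA (generated fA s) (generated_closed fA s).

(* Main.v *)
Require Import Defs.
From Stdlib Require Import Classical ClassicalEpsilon Cantor FunctionalExtensionality ClassicalChoice.

Section S.
Variables (tau A : Type) (fA : ops tau A).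

Definition B (s : nat -> A) := {x : A | generated fA s x}.
Definition C := forall s : nat -> A, B s.
Definition fC : ops tau C := prod_ops B (fun s => gen_ops fA s).

Definition cov (s0 u : nat -> A) := forall i, generated fA u (s0 i).

Definition Q (d : C) := exists s0, forall u, cov s0 u -> proj1_sig (d u) = proj1_sig (d s0).

Lemma gen_base s i : generated fA s (s i).
Proof. intros P _ H; apply H. Qed.

Lemma cov_refl s : cov s s.
Proof. intro i; apply gen_base. Qed.

Definition merge (F : nat -> nat -> A) : nat -> A :=
  fun m => let (n, i) := of_nat m in F n i.

Lemma merge_cov F u n : cov (merge F) u -> cov (F n) u.
Proof.
  intros H i. specialize (H (to_nat (n, i))). unfold merge in H.
  rewrite cancel_of_to in H. exact H.
Qed.

Lemma fC_val f d u : proj1_sig (fC f d u) = fA f (fun n => proj1_sig (d n u)).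
Proof. reflexivity. Qed.

Lemma Q_closed : closed_sub fC Q.
Proof.
  intros f d Hd.
  destruct (choice (fun n s0 => forall u, cov s0 u -> proj1_sig (d n u) = proj1_sig (d n s0)) Hd)
    as [W HW].
  exists (merge W). intros u Hu.
  rewrite !fC_val. f_equal. apply functional_extensionality. intro n.
  rewrite (HW n u (merge_cov _ _ _ Hu)).
  rewrite (HW n (merge W) (merge_cov _ _ _ (cov_refl _))). reflexivity.
Qed.

Definition D := {d : C | Q d}.
Definition fD : ops tau D := sub_ops fC Q Q_closed.

Definition W (x : D) : nat -> A := proj1_sig (constructive_indefinite_description _ (proj2_sig x)).
Lemma W_spec x u : cov (W x) u -> proj1_sig (proj1_sig x u) = proj1_sig (proj1_sig x (W x)).
Proof. unfold W. destruct (constructive_indefinite_description _ _) as [s Hs]. apply Hs. Qed.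

Definition h (x : D) : A := proj1_sig (proj1_sig x (W x)).

Lemma h_hom : is_hom fD fA h.
Proof.
  intros f s.
  set (F := fun n => match n with O => W (fD f s) | S m => W (s m) end).
  set (u := merge F).
  assert (H0 : cov (W (fD f s)) u) by exact (merge_cov F u 0 (cov_refl _)).
  unfold h at 1. rewrite <- (W_spec _ u H0).
  change (proj1_sig (fC f (fun n => proj1_sig (s n)) u) = fA f (fun i => h (s i))).
  rewrite fC_val. f_equal. apply functional_extensionality. intro n.
  unfold h. rewrite (W_spec (s n) u (merge_cov F u (S n) (cov_refl _))). reflexivity.
Qed.

Definition dsel (a : A) : C := fun s =>
  match excluded_middle_informative (generated fA s a) with
  | left H => exist _ a H
  | right _ => exist _ (s 0) (gen_base s 0)
  end.

Lemma dsel_val a s : generated fA s a -> proj1_sig (dsel a s) = a.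
Proof. intro H. unfold dsel. destruct excluded_middle_informative; [reflexivity|contradiction]. Qed.

Lemma dsel_Q a : Q (dsel a).
Proof.
  exists (fun _ => a). intros u Hu.
  rewrite (dsel_val a u (Hu 0)). rewrite (dsel_val a _ (gen_base (fun _ => a) 0)). reflexivity.
Qed.

Lemma h_surj : surjective h.
Proof.
  intro a. exists (exist _ (dsel a) (dsel_Q a)).
  set (x := exist Q (dsel a) (dsel_Q a)).
  set (F := fun n => match n with O => W x | S _ => fun _ => a end).
  set (u := merge F).
  unfold h. rewrite <- (W_spec x u (merge_cov F u 0 (cov_refl _))).
  apply dsel_val. exact (merge_cov F u 1 (cov_refl _) 0).
Qed.
End S.

Theorem theorem6p3 (tau : Type) (K : algclass tau) :
  variety K ->
  forall (A : Type) (fA : ops tau A),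
    (forall s : nat -> A, K {x : A | generated fA s x} (gen_ops fA s)) ->
    K A fA.
Proof.
  intros [_ [Hh [Hs Hp]]] A fA HK.
  apply (Hh _ A (fD tau A fA) fA (h tau A fA)).
  - apply Hs. apply Hp. intro s. apply HK.
  - apply h_hom.
  - apply h_surj.
Qed.
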